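(* Let $n\geq 4$ and $m>3$ be integers and let $\psi$ be an automorphism of $\mathcal{CSR}(m,n)$. Let $a\neq b$ in $[m]$ and let $\xi,\xi'$ be vertices. If $\psi(\xi+S_{ab})=\varsigma+S_{pq}$ and $\psi(\xi'+S_{ab})=\varsigma'+S_{rs}$ for some vertices $\varsigma,\varsigma'$ and some $p\neq q$, $r\neq s$ in $[m]$, then $\{p,q\}=\{r,s\}$.
   Context: For positive integers $m,n$, the cyclic simplicial rook graph $\mathcal{CSR}(m,n)$ is the graph whose vertices are the vectors $(a_1,\dots,a_m)\in\mathbb{Z}_n^m$ with $a_1+\cdots+a_m\equiv 0 \pmod n$, two vertices being adjacent if and only if their vectors differ in exactly two coordinates. $[m]=\{1,\dots,m\}$; $e_i\in\mathbb{Z}_n^m$ is the vector with $1$ in coordinate $i$ and $0$ elsewhere; for distinct $a,b\in[m]$, $S_{ab}=\{\alpha(e_a-e_b)\mid \alpha\in\mathbb{Z}_n\}$; and $x+A=\{x+y\mid y\in A\}$. *)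

(* Defs.v *)
From HB Require Import structures.
From mathcomp Require Import all_boot all_order all_algebra.
Set Implicit Arguments. Unset Strict Implicit. Unset Printing Implicit Defensive.
Import GRing.Theory.
Local Open Scope ring_scope.

(* Vectors in Z_n^m, coordinates indexed by 'I_m (i.e. [m] shifted to 0..m-1). *)
Definition vec (m n : nat) := {ffun 'I_m -> 'Z_n}.

Definition evec (m n : nat) (i : 'I_m) : vec m n := [ffun j => (j == i)%:R].

Definition csr_vertex (m n : nat) := {x : vec m n | \sum_(i < m) x i == 0}.

Definition csr_adj (m n : nat) (x y : csr_vertex m n) : bool :=
  #|[set i : 'I_m | val x i != val y i]| == 2%N.

Definition csr_automorphism (m n : nat) (psi : csr_vertex m n -> csr_vertex m n) :=
  bijective psi /\ forall x y, csr_adj (psi x) (psi y) = csr_adj x y.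

Definition coset_S (m n : nat) (x : vec m n) (a b : 'I_m) : {set csr_vertex m n} :=
  [set v : csr_vertex m n |
     [exists alpha : 'Z_n,
        val v == [ffun i => x i + alpha * (evec n a i - evec n b i)]]].

(* Main.v *)
Require Import Defs.
From mathcomp Require Import all_boot all_order all_algebra ring zify.
Set Implicit Arguments. Unset Strict Implicit. Unset Printing Implicit Defensive.
Import GRing.Theory.
Local Open Scope ring_scope.

Ltac eqsimp := repeat first
  [ rewrite eqxx
  | match goal with
    | H : is_true (?i != ?j) |- context [?i == ?j] => rewrite (negbTE H)
    | H : is_true (?i != ?j) |- context [?j == ?i] => rewrite (eq_sym j i) (negbTE H)
    end ].
Ltac splitk k := repeat (match goal with |- context [k == ?i] =>
   let h := fresh "hk" in have [->|h] := eqVneq k i end; eqsimp; rewrite /=).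

Definition pt {m n : nat} (i : 'I_m) (c : 'Z_n) : vec m n := [ffun k => if k == i then c else 0].
Definition D {m n : nat} (c : 'Z_n) (i j : 'I_m) : vec m n := pt i c + pt j (- c).
Definition sumv {m n : nat} (w : vec m n) := \sum_(k < m) w k.
Lemma nz_eq {n : nat} (x e : 'Z_n) : x = e -> e != 0 -> x != 0.
Proof. by move=> ->. Qed.
Ltac ev := rewrite /D /pt ?ffunE; eqsimp; simpl; try done.
Ltac vcomp := let k := fresh "k" in apply/ffunP => k; rewrite /D /pt !ffunE; splitk k; ring.

Ltac nz e := apply: (nz_eq (e := e)); [ring | try assumption].

Section SecS.
Variables (m n : nat).
Hypothesis hn : (4 <= n)%N.
Hypothesis hm : (3 < m)%N.
Notation V := (csr_vertex m n).
Notation vecT := (vec m n).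
Notation Zn := ('Z_n).


Lemma sumvD (w1 w2 : vecT) : sumv (w1 + w2) = sumv w1 + sumv w2.
Proof. by rewrite /sumv -big_split; apply: eq_bigr => k _; rewrite ffunE. Qed.
Lemma sumvB (w1 w2 : vecT) : sumv (w1 - w2) = sumv w1 - sumv w2.
Proof. by rewrite /sumv -sumrB; apply: eq_bigr => k _; rewrite !ffunE. Qed.
Lemma sumv_pt (i : 'I_m) (c : Zn) : sumv (pt i c) = c.
Proof.
rewrite /sumv (bigD1 i) //= ffunE eqxx big1 ?addr0 // => k /negbTE kn.
by rewrite ffunE kn.
Qed.
Lemma sumv_D (c : Zn) (i j : 'I_m) : sumv (D c i j) = 0.
Proof. by rewrite /D sumvD !sumv_pt subrr. Qed.
Lemma sumv_val (u : V) : sumv (val u) = 0.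
Proof. exact: (eqP (valP u)). Qed.

Definition mkv (u : V) (w : vecT) : V := insubd u (val u + w).
Lemma mkvE u w : sumv w = 0 -> val (mkv u w) = val u + w.
Proof.
move=> hw; rewrite /mkv insubdK // unfold_in.
by rewrite -/(sumv _) sumvD sumv_val hw addr0.
Qed.

Definition dset (x y : vecT) := [set k | x k != y k].
Lemma adjE (x y : V) : csr_adj x y = (#|dset (val x) (val y)| == 2%N).
Proof. by []. Qed.
Lemma dset_sym x y : dset x y = dset y x.
Proof. by apply/setP => k; rewrite !inE eq_sym. Qed.
Lemma adj_sym (x y : V) : csr_adj x y = csr_adj y x.
Proof. by rewrite !adjE dset_sym. Qed.
Lemma dset_sub x y : dset x y = dset (x - y) 0.
Proof. by apply/setP => k; rewrite !inE !ffunE subr_eq0. Qed.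
Lemma adj_irr (x : V) : csr_adj x x = false.
Proof.
rewrite adjE; suff -> : dset (val x) (val x) = set0 by rewrite cards0.
by apply/setP => k; rewrite !inE eqxx.
Qed.

Lemma card2_intro (A : {set 'I_m}) i j : i != j -> i \in A -> j \in A ->
  (forall k, k != i -> k != j -> k \notin A) -> #|A| = 2%N.
Proof.
move=> ij iA jA h; suff -> : A = [set i; j] by rewrite cards2 ij.
apply/setP => k; rewrite !inE; have [->|ki] := eqVneq k i => //.
have [->|kj] := eqVneq k j => //; exact/negbTE/h.
Qed.

Lemma card_ge3 (A : {set 'I_m}) i j k : i != j -> i != k -> j != k ->
  i \in A -> j \in A -> k \in A -> (2 < #|A|)%N.
Proof.
move=> ij ik jk iA jA kA.
have: [set i; j; k] \subset A by apply/subsetP => z; rewrite !inE; case/orP => [/orP[]|] /eqP ->.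
move/subset_leq_card; apply: leq_trans.
by rewrite -setUA cardsU1 cards2 jk !inE negb_or ij ik.
Qed.

Lemma adj_of_D (y z : V) c i j : i != j -> c != 0 -> val y - val z = D c i j -> csr_adj y z.
Proof.
move=> ij c0 E; rewrite adjE dset_sub E; apply/eqP.
apply: (card2_intro ij); rewrite /dset /D /pt ?inE ?ffunE; eqsimp => /=.
- by rewrite addr0.
- by rewrite add0r oppr_eq0.
- by move=> k ki kj; rewrite !inE !ffunE; eqsimp; rewrite negbK; apply/eqP; ring.
Qed.

Lemma nadj_of3 (y z : V) i j k : i != j -> i != k -> j != k ->
  val y i != val z i -> val y j != val z j -> val y k != val z k -> ~~ csr_adj y z.
Proof.
move=> ij ik jk hi hj hk; rewrite adjE.
have := card_ge3 ij ik jk (A := dset (val y) (val z)); rewrite !inE => /(_ hi hj hk).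
by case: (#|_|) => [|[|[|]]].
Qed.





Lemma three_nz (w : vecT) i j k : i != j -> i != k -> j != k ->
  w i != 0 -> w j != 0 -> w k != 0 -> #|dset w 0| != 2%N.
Proof.
move=> ij ik jk hi hj hk.
have := card_ge3 ij ik jk (A := dset w 0); rewrite !inE !ffunE => /(_ hi hj hk).
by case: (#|_|) => [|[|[|]]].
Qed.

Lemma D_swap (c : Zn) (i j : 'I_m) : D c i j = D (- c) j i.
Proof. by rewrite /D opprK addrC. Qed.

Lemma zero_dset (w : vecT) : (forall k, w k = 0) -> #|dset w 0| = 0%N.
Proof.
move=> h; apply/eqP; rewrite cards_eq0; apply/eqP/setP => k.
by rewrite !inE !ffunE h eqxx.
Qed.

Lemma supp2_form (w : vecT) : sumv w = 0 -> #|dset w 0| = 2%N ->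
  exists i j c, [/\ i != j, c != 0 & w = D c i j].
Proof.
move=> hs /eqP /cards2P [i [j [ij E]]].
have hk k : (w k != 0) = (k \in [set i; j]) by rewrite -E !inE ffunE.
have wk k : k != i -> k != j -> w k = 0.
  by move=> ki kj; apply/eqP; move: (hk k); rewrite !inE (negbTE ki) (negbTE kj) => /negbFE.
have wi : w i != 0 by rewrite hk !inE eqxx.
have ji : j != i by rewrite eq_sym.
have hs2 : w i + w j = 0.
  rewrite -hs /sumv (bigD1 i) //= (bigD1 j) //= big1 ?addr0 // => k /andP [ki kj].
  exact: wk.
exists i, j, (w i); split => //; apply/ffunP => k; rewrite /D /pt !ffunE.
have [->|ki] := eqVneq k i; first by rewrite (negbTE ij) addr0.
have [->|kj] := eqVneq k j.
  have e : w i = - w j by apply/eqP; rewrite -addr_eq0 hs2.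
  by rewrite e; eqsimp; ring.
by rewrite wk // addr0.
Qed.

Lemma adj_form (u z : V) : csr_adj u z ->
  exists i j c, [/\ i != j, c != 0 & val z - val u = D c i j].
Proof.
rewrite adjE dset_sym dset_sub => /eqP h; apply: supp2_form h.
by rewrite sumvB !sumv_val subrr.
Qed.


Lemma cn_class (u v z : V) al a b : a != b -> al != 0 -> val v - val u = D al a b ->
  csr_adj u z -> csr_adj v z ->
  [\/ exists2 be, (be != 0) && (be != al) & val z - val u = D be a b,
      exists2 x, (x != a) && (x != b) & val z - val u = D al a x
    | exists2 x, (x != a) && (x != b) & val z - val u = D al x b].
Proof.
move=> ab al0 Ev /adj_form [i [j [be [ij be0 Ez]]]].
rewrite adjE dset_sym dset_sub.
have -> : val z - val v = D be i j - D al a b.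
  by rewrite -Ez -Ev opprB addrA subrK.
move=> /eqP hc.
set q := D be i j - D al a b.
have q3 : forall k1 k2 k3, k1 != k2 -> k1 != k3 -> k2 != k3 -> q k1 != 0 -> q k2 != 0 -> q k3 != 0 -> False.
  by move=> k1 k2 k3 h12 h13 h23 h1 h2 h3; move: (three_nz h12 h13 h23 h1 h2 h3); rewrite hc.
have q0 : (forall k, q k = 0) -> False.
  by move=> h; move: (zero_dset h); rewrite hc.
have [eia|nia] := eqVneq i a.
  subst i; have [ejb|njb] := eqVneq j b.
    subst j; apply: Or31; exists be => //; rewrite be0 /=.
    by apply/negP => /eqP eb; subst be; apply: q0 => k; rewrite /q; ev; splitk k; ring.
  have ja : j != a by rewrite eq_sym.
  have [eb|nb] := eqVneq be al.
    by rewrite eb in Ez; apply: Or32; exists j; rewrite // ja njb.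
  exfalso; rewrite eq_sym in njb; apply: (q3 a b j) => //; rewrite /q; ev.
  - by nz (be - al); rewrite subr_eq0.
  - by nz al.
  - by nz (- be); rewrite oppr_eq0.
have [eib|nib] := eqVneq i b.
  subst i; have [eja|nja] := eqVneq j a.
    subst j; apply: Or31; exists (- be); last by rewrite Ez D_swap.
    rewrite oppr_eq0 be0 /=; apply/negP => /eqP eb.
    by apply: q0 => k; rewrite /q; ev; splitk k; rewrite -?eb; ring.
  have [eb|nb] := eqVneq be (- al).
    rewrite eb in Ez; apply: Or33; exists j; first by rewrite nja eq_sym.
    by rewrite Ez D_swap opprK.
  exfalso; rewrite eq_sym in ij nja; apply: (q3 a b j) => //; rewrite /q; ev.
  - by nz (- al); rewrite oppr_eq0.
  - by nz (be + al); rewrite addr_eq0.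
  - by nz (- be); rewrite oppr_eq0.
have [eja|nja] := eqVneq j a.
  subst j; have [eb|nb] := eqVneq be (- al).
    rewrite eb in Ez; apply: Or32; exists i; first by rewrite nia.
    by rewrite Ez D_swap opprK.
  exfalso; have ba : b != a by rewrite eq_sym.
  apply: (q3 i b a) => //; rewrite /q; ev.
  - by nz be.
  - by nz al.
  - by nz (- (be + al)); rewrite oppr_eq0 addr_eq0.
have [ejb|njb] := eqVneq j b.
  subst j; have [eb|nb] := eqVneq be al.
    by rewrite eb in Ez; apply: Or33; exists i; rewrite // nia.
  exfalso; apply: (q3 i a b) => //; rewrite /q; ev.
  - by nz be.
  - by nz (- al); rewrite oppr_eq0.
  - by nz (al - be); rewrite subr_eq0 eq_sym.
exfalso; rewrite eq_sym in nia nja; apply: (q3 i j a) => //; rewrite /q; ev.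
- by nz be.
- by nz (- be); rewrite oppr_eq0.
- by nz (- al); rewrite oppr_eq0.
Qed.

Lemma coset_memP (u z : V) a b : a != b ->
  reflect (exists be, val z - val u = D be a b) (z \in coset_S (val u) a b).
Proof.
move=> ab; rewrite inE; apply: (iffP existsP) => [[be /eqP E]|[be E]]; exists be.
  rewrite E; apply/ffunP => k; rewrite /D /pt !ffunE; splitk k; ring.
apply/eqP/ffunP => k; move/ffunP: E => /(_ k); rewrite /D /pt !ffunE => E.
have -> : val z k = val u k + (val z k - val u k) by ring.
rewrite E; splitk k; ring.
Qed.

Definition CNs (u v z : V) := csr_adj u z && csr_adj v z.
Definition cliqp (u v z : V) := [forall z1, forall z2,
  (CNs u v z1 && CNs u v z2 && csr_adj z z1 && csr_adj z z2 && (z1 != z2)) ==> csr_adj z1 z2].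
Definition many (u v z z' : V) := [exists y1, exists y2, exists y3,
  [&& y1 != y2, y1 != y3, y2 != y3,
      [&& y1 != u, y1 != v, y2 != u, y2 != v, y3 != u & y3 != v] &
      [&& csr_adj y1 z, csr_adj y1 z', csr_adj y2 z, csr_adj y2 z', csr_adj y3 z & csr_adj y3 z']]].
Definition sepp (u v z : V) := [forall z', (CNs u v z' && (z' != z) && ~~ csr_adj z z') ==> many u v z z'].
Definition Cos (u v : V) := [set z | (z == u) || (z == v) || [&& CNs u v z, cliqp u v z & sepp u v z]].

Section Inv.
Variable psi : V -> V.
Hypothesis psi_bij : bijective psi.
Hypothesis hadj : forall x y, csr_adj (psi x) (psi y) = csr_adj x y.

Let psi_inj : injective psi. Proof. exact: bij_inj. Qed.

Lemma forall_bij (P : pred V) : [forall x, P x] = [forall x, P (psi x)].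
Proof.
case: psi_bij => g _ K.
apply/forallP/forallP => h x; first exact: h.
by rewrite -(K x); apply: h.
Qed.

Lemma exists_bij (P : pred V) : [exists x, P x] = [exists x, P (psi x)].
Proof.
case: psi_bij => g _ K.
apply/existsP/existsP => -[x h]; last by exists (psi x).
by exists (g x); rewrite K.
Qed.

Lemma Cos_mem u v z : (psi z \in Cos (psi u) (psi v)) = (z \in Cos u v).
Proof.
rewrite !inE !(inj_eq psi_inj) /CNs !hadj; congr (_ || _ || (_ && (_ && _))).
  rewrite /cliqp forall_bij; apply: eq_forallb => z1.
  rewrite forall_bij; apply: eq_forallb => z2.
  by rewrite /CNs !hadj !(inj_eq psi_inj).
rewrite /sepp forall_bij; apply: eq_forallb => z'.
rewrite /CNs !hadj !(inj_eq psi_inj); congr (_ ==> _).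
rewrite /many exists_bij; apply: eq_existsb => y1.
rewrite exists_bij; apply: eq_existsb => y2.
rewrite exists_bij; apply: eq_existsb => y3.
by rewrite !hadj !(inj_eq psi_inj).
Qed.

Lemma Cos_img u v : psi @: Cos u v = Cos (psi u) (psi v).
Proof.
apply/setP => w; case: psi_bij => g K1 K2.
rewrite -(K2 w) mem_imset; last exact: psi_inj.
by rewrite Cos_mem.
Qed.

End Inv.

End SecS.

Section SecS2.
Variables (m n : nat).
Notation V := (csr_vertex m n).
Notation vecT := (vec m n).
Notation Zn := ('Z_n).

Lemma subE (y u : V) (W : vecT) : val y - val u = W -> val y = val u + W.
Proof. by move=> <-; rewrite addrC subrK. Qed.

Lemma nadj3 (y z : V) i j k : i != j -> i != k -> j != k ->
  (val y - val z) i != 0 -> (val y - val z) j != 0 -> (val y - val z) k != 0 -> ~~ csr_adj y z.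
Proof.
move=> ij ik jk hi hj hk; rewrite adjE dset_sub.
by apply/negP => /eqP h; move: (three_nz ij ik jk hi hj hk); rewrite h.
Qed.

Lemma neq_at (y z : V) k : val y k != val z k -> y != z.
Proof. by apply: contraNneq => ->. Qed.

Lemma fresh3 (T : finType) (a b c : T) : (3 < #|T|)%N -> exists y : T, [&& y != a, y != b & y != c].
Proof.
move=> hT; apply/existsP; apply: contraLR hT; rewrite negb_exists => /forallP h.
rewrite -leqNgt.
have : [set: T] \subset [set a; b; c].
  apply/subsetP => y _; move: (h y); rewrite !inE.
  by case: (y == a); case: (y == b); case: (y == c).
move/subset_leq_card; rewrite cardsT => /leq_trans; apply.
rewrite -setUA cardsU1 cardsU1 cards1.
by case: (_ \notin _); case: (_ \notin _).
Qed.

Lemma card_ge4 (A : {set 'I_m}) i1 i2 i3 i4 :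
  i1 != i2 -> i1 != i3 -> i1 != i4 -> i2 != i3 -> i2 != i4 -> i3 != i4 ->
  i1 \in A -> i2 \in A -> i3 \in A -> i4 \in A -> (3 < #|A|)%N.
Proof.
move=> h12 h13 h14 h23 h24 h34 h1 h2 h3 h4.
rewrite (cardsD1 i4) h4 add1n ltnS.
by apply: (card_ge3 h12 h13 h23); rewrite !inE; apply/andP; split.
Qed.

Lemma S4 (p w : vecT) i1 i2 i3 i4 :
  i1 != i2 -> i1 != i3 -> i1 != i4 -> i2 != i3 -> i2 != i4 -> i3 != i4 ->
  w i1 != 0 -> w i2 != 0 -> w i3 != 0 -> w i4 != 0 ->
  #|dset p 0| = 2%N -> #|dset (p - w) 0| = 2%N -> forall k, p k = 0 \/ p k = w k.
Proof.
move=> h12 h13 h14 h23 h24 h34 w1 w2 w3 w4 hP hQ.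
set P := dset p 0; set Q := dset (p - w) 0.
have inPQ k : w k != 0 -> k \in P :|: Q.
  move=> wk; rewrite !inE !ffunE; have [pk0|//] := eqVneq (p k) 0.
  by rewrite pk0 add0r oppr_eq0 wk.
have := card_ge4 h12 h13 h14 h23 h24 h34 (inPQ _ w1) (inPQ _ w2) (inPQ _ w3) (inPQ _ w4).
move: (cardsUI P Q); rewrite hP hQ => E h4.
have : (#|P :&: Q| <= 0)%N by rewrite -(leq_add2l #|P :|: Q|) E addn0.
rewrite leqn0 cards_eq0 => /eqP I0 k.
have [pk0|pk0] := eqVneq (p k) 0; first by left.
right; apply/eqP; rewrite -subr_eq0; apply/negPn/negP => hk.
have : k \in P :&: Q by rewrite !inE !ffunE pk0 hk.
by rewrite I0 inE.
Qed.


Section Edge.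
Variables (u v : V) (al : Zn) (a b : 'I_m).
Hypotheses (ab : a != b) (al0 : al != 0) (Ev : val v - val u = D al a b).

Lemma T_cn (z : V) be : be != 0 -> be != al -> val z - val u = D be a b -> CNs u v z.
Proof.
move=> be0 bea Ez; rewrite /CNs; apply/andP; split; rewrite adj_sym.
  exact: (adj_of_D ab be0 Ez).
apply: (adj_of_D (c := be - al) ab); first by rewrite subr_eq0.
by rewrite (subE Ez) (subE Ev); vcomp.
Qed.

Lemma A_cn (z : V) x : x != a -> x != b -> val z - val u = D al a x -> CNs u v z.
Proof.
move=> xa xb Ez; rewrite /CNs; apply/andP; split; rewrite adj_sym.
  by apply: (adj_of_D _ al0 Ez); rewrite eq_sym.
apply: (adj_of_D (c := al) (i := b) (j := x)) => //; first by rewrite eq_sym.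
by rewrite (subE Ez) (subE Ev); vcomp.
Qed.

Lemma TA_nadj (z z' : V) be x : x != a -> x != b -> be != 0 -> be != al ->
  val z - val u = D be a b -> val z' - val u = D al a x -> ~~ csr_adj z z'.
Proof.
move=> xa xb be0 bea Ez Ez'.
have ax : a != x by rewrite eq_sym.
have bx : b != x by rewrite eq_sym.
apply: (nadj3 (i := a) (j := b) (k := x)) => //; rewrite (subE Ez) (subE Ez') !ffunE; ev.
- by nz (be - al); rewrite subr_eq0.
- by nz (- be); rewrite oppr_eq0.
- by nz al.
Qed.

Lemma neq_d (y z : V) k : (val y - val z) k != 0 -> y != z.
Proof. by apply: contraNneq => ->; rewrite !ffunE subrr. Qed.

Lemma mkv_val (w0 : V) W : sumv W = 0 -> val (mkv w0 W) = val w0 + W.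
Proof. exact: mkvE. Qed.

Lemma TA_many (z z' : V) be x : x != a -> x != b -> be != 0 -> be != al ->
  val z - val u = D be a b -> val z' - val u = D al a x -> many u v z z'.
Proof.
move=> xa xb be0 bea Ez Ez'.
have ax : a != x by rewrite eq_sym.
have bx : b != x by rewrite eq_sym.
have ba : b != a by rewrite eq_sym.
have Ez1 := subE Ez; have Ez2 := subE Ez'; have Ev1 := subE Ev.
set W1 := D be a x.
set W2 := pt a be + pt b (al - be) + pt x (- al).
set W3 := pt a (al + be) + pt b (- be) + pt x (- al).
have E1 : val (mkv u W1) = val u + W1 by apply: mkv_val; rewrite sumv_D.
have E2 : val (mkv u W2) = val u + W2 by apply: mkv_val; rewrite !sumvD !sumv_pt; ring.
have E3 : val (mkv u W3) = val u + W3 by apply: mkv_val; rewrite !sumvD !sumv_pt; ring.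
apply/existsP; exists (mkv u W1); apply/existsP; exists (mkv u W2); apply/existsP; exists (mkv u W3).
have alb : al - be != 0 by rewrite subr_eq0 eq_sym.
have bal : be - al != 0 by rewrite subr_eq0.
have nal : - al != 0 by rewrite oppr_eq0.
have nbe : - be != 0 by rewrite oppr_eq0.
apply/and5P; split.
- by apply: (neq_d (k := b)); rewrite E1 E2 /W1 /W2; ev; nz (be - al).
- by apply: (neq_d (k := b)); rewrite E1 E3 /W1 /W3; ev; nz be.
- by apply: (neq_d (k := a)); rewrite E2 E3 /W2 /W3; ev; nz (- al).
- apply/andP; split; last (apply/and5P; split).
  + by apply: (neq_d (k := a)); rewrite E1 /W1; ev; nz be.
  + by apply: (neq_d (k := x)); rewrite E1 Ev1 /W1; ev; nz (- be).
  + by apply: (neq_d (k := x)); rewrite E2 /W2; ev; nz (- al).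
  + by apply: (neq_d (k := x)); rewrite E2 Ev1 /W2; ev; nz (- al).
  + by apply: (neq_d (k := x)); rewrite E3 /W3; ev; nz (- al).
  + by apply: (neq_d (k := x)); rewrite E3 Ev1 /W3; ev; nz (- al).
- apply/andP; split; last (apply/and5P; split).
  + by apply: (adj_of_D (c := be) (i := b) (j := x)) => //; rewrite E1 Ez1 /W1; vcomp.
  + by apply: (adj_of_D (c := be - al) (i := a) (j := x)) => //; rewrite E1 Ez2 /W1; vcomp.
  + by apply: (adj_of_D (c := al) (i := b) (j := x)) => //; rewrite E2 Ez1 /W2; vcomp.
  + by apply: (adj_of_D (c := be - al) (i := a) (j := b)) => //; rewrite E2 Ez2 /W2; vcomp.
  + by apply: (adj_of_D (c := al) (i := a) (j := x)) => //; rewrite E3 Ez1 /W3; vcomp.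
  + by apply: (adj_of_D (c := be) (i := a) (j := b)) => //; rewrite E3 Ez2 /W3; vcomp.
Qed.

Lemma pt0 (i : 'I_m) : pt i (0 : Zn) = 0.
Proof. by apply/ffunP => k; rewrite !ffunE; case: (_ == _). Qed.

Lemma cnb (z z' y : V) x x' : x != a -> x != b -> x' != a -> x' != b -> x' != x ->
  al + al != 0 -> val z - val u = D al a x -> val z' - val u = D al x' b ->
  csr_adj y z -> csr_adj y z' -> y != u -> y != v ->
  val y - val z' = D al a x \/ val y - val z' = D al b x.
Proof.
move=> xa xb x'a x'b x'x al2 Ez Ez' ayz ayz' yu yv.
have ax : a != x by rewrite eq_sym.
have bx : b != x by rewrite eq_sym.
have ax' : a != x' by rewrite eq_sym.
have bx' : b != x' by rewrite eq_sym.
have xx' : x != x' by rewrite eq_sym.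
have ba : b != a by rewrite eq_sym.
have Ez1 := subE Ez; have Ez2 := subE Ez'; have Ev1 := subE Ev.
have nalal : - al != al.
  by apply: contraNneq al2 => h; rewrite -{1}h addNr.
have alnal : al != - al by rewrite eq_sym.
have nal0 : - al != 0 by rewrite oppr_eq0.
set p := val y - val z'.
have [i [j [c [ij c0 Ep]]]] : exists i j c, [/\ i != j, c != 0 & p = D c i j].
  by apply: adj_form; rewrite adj_sym.
set w := val z - val z'.
have Ew : w = D al a x - D al x' b by rewrite /w Ez1 Ez2; vcomp.
have Eq : val y - val z = p - w by rewrite /p /w opprB addrA subrK.
have hq : #|dset (p - w) 0| = 2%N by apply/eqP; rewrite -Eq -dset_sub; exact: ayz.
have hp : #|dset p 0| = 2%N by apply/eqP; rewrite /p -dset_sub; exact: ayz'.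
have hS := S4 ab ax ax' bx bx' xx' _ _ _ _ hp hq.
have {hS} hS : forall k, p k = 0 \/ p k = w k.
  apply: hS; rewrite Ew; ev.
  - by nz al.
  - by nz al.
  - by nz (- al).
  - by nz (- al).
have pi : p i = c by rewrite Ep; ev; ring.
have pj : p j = - c by rewrite Ep; ev; ring.
have ci : c = w i by case: (hS i) => h; [move: c0; rewrite -pi h eqxx | rewrite -pi h].
have cj : - c = w j by case: (hS j) => h; [move: c0; rewrite -oppr_eq0 -pj h eqxx | rewrite -pj h].
have fin : forall i' j', (i' = a \/ i' = b) -> (j' = x \/ j' = x') -> p = D al i' j' ->
    val y - val z' = D al a x \/ val y - val z' = D al b x.
  move=> i' j' [->|->] [->|->] Ep'.
  - by left.
  - exfalso; move/eqP: yv; apply; apply/val_inj.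
    by rewrite (subE Ep') Ez2 Ev1; vcomp.
  - by right.
  - exfalso; move/eqP: yu; apply; apply/val_inj.
    by rewrite (subE Ep') Ez2; vcomp.
have wal k : w k = al -> k = a \/ k = b.
  rewrite Ew; have [->|ka] := eqVneq k a; first by left.
  have [->|kb] := eqVneq k b; first by right.
  have [->|kx] := eqVneq k x; first by ev => h; exfalso; move/eqP: nalal; apply; apply: etrans _ h; ring.
  have [->|kx'] := eqVneq k x'; first by ev => h; exfalso; move/eqP: nalal; apply; apply: etrans _ h; ring.
  by ev => h; exfalso; move/eqP: al0; apply; rewrite -h; ring.
have wnal k : w k = - al -> k = x \/ k = x'.
  rewrite Ew; have [->|kx] := eqVneq k x; first by left.
  have [->|kx'] := eqVneq k x'; first by right.
  have [->|ka] := eqVneq k a; first by ev => h; exfalso; move/eqP: alnal; apply; apply: etrans _ h; ring.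
  have [->|kb] := eqVneq k b; first by ev => h; exfalso; move/eqP: alnal; apply; apply: etrans _ h; ring.
  by ev => h; exfalso; move/eqP: nal0; apply; rewrite -h; ring.
have wnz k : w k != 0 -> w k = al \/ w k = - al.
  rewrite Ew; have [->|ka] := eqVneq k a; first by ev => _; left; ring.
  have [->|kb] := eqVneq k b; first by ev => _; left; ring.
  have [->|kx] := eqVneq k x; first by ev => _; right; ring.
  have [->|kx'] := eqVneq k x'; first by ev => _; right; ring.
  by ev => h; exfalso; move/eqP: h; apply; ring.
have : w i != 0 by rewrite -ci.
case/wnz => wi.
  apply: (fin i j); first exact: wal.
    by apply: wnal; rewrite -cj ci wi.
  by rewrite Ep ci wi.
apply: (fin j i); first by apply: wal; rewrite -cj ci wi opprK.
  exact: wnal.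
by rewrite Ep D_swap ci wi opprK.
Qed.


End Edge.
Lemma sameP (y1 y2 z' : V) P : val y1 - val z' = P -> val y2 - val z' = P -> y1 = y2.
Proof. by move=> e1 e2; apply/val_inj; rewrite (subE e1) (subE e2). Qed.

Lemma A_bad (u v : V) al a b (z : V) x : (3 < m)%N -> a != b -> al != 0 ->
  val v - val u = D al a b -> x != a -> x != b -> val z - val u = D al a x ->
  ~~ (cliqp u v z && sepp u v z).
Proof.
move=> hm ab al0 Ev xa xb Ez.
have h3 : (3 < #|'I_m|)%N by rewrite card_ord.
have [x' /and3P [x'a x'b x'x]] := fresh3 a b x h3.
have ax : a != x by rewrite eq_sym.
have bx : b != x by rewrite eq_sym.
have ax' : a != x' by rewrite eq_sym.
have bx' : b != x' by rewrite eq_sym.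
have xx' : x != x' by rewrite eq_sym.
have ba : b != a by rewrite eq_sym.
have nal0 : - al != 0 by rewrite oppr_eq0.
have Ev' : val v - val u = D (- al) b a by rewrite Ev D_swap.
have Ez1 := subE Ez.
have [al2|al2] := eqVneq (al + al) 0.
  set z1 := mkv u (D al x b); set z2 := mkv u (D al a x').
  have E1 : val z1 = val u + D al x b by apply: mkv_val; rewrite sumv_D.
  have E2 : val z2 = val u + D al a x' by apply: mkv_val; rewrite sumv_D.
  apply/negP => /andP [hc _]; move/forallP: hc => /(_ z1) /forallP /(_ z2) /implyP H.
  have : ~~ csr_adj z1 z2.
    apply: (nadj3 (i := x) (j := b) (k := a)) => //; rewrite E1 E2 !ffunE; ev.
    - by nz al.
    - by nz (- al).
    - by nz (- al).
  move/negP; apply; apply: H.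
  have c1 : CNs u v z1.
    by apply: (A_cn (x := x) _ nal0 Ev') => //; rewrite E1 D_swap addrC addKr.
  have c2 : CNs u v z2.
    by apply: (A_cn (x := x') ab al0 Ev) => //; rewrite E2 addrC addKr.
  have a1 : csr_adj z z1.
    apply: (adj_of_D (c := al) ab al0).
    have -> : val z - val z1 = D al a b + pt b (al + al) - pt x (al + al).
      by rewrite Ez1 E1; vcomp.
    by rewrite al2 !pt0 subr0 addr0.
  have a2 : csr_adj z z2.
    by apply: (adj_of_D (c := al) (i := x') (j := x)) => //; rewrite Ez1 E2; vcomp.
  have d12 : z1 != z2 by apply: (neq_d (k := a)); rewrite E1 E2; ev; nz (- al).
  by rewrite c1 c2 a1 a2 d12.
set z' := mkv u (D al x' b).
have E' : val z' = val u + D al x' b by apply: mkv_val; rewrite sumv_D.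
apply/negP => /andP [_ hs]; move/forallP: hs => /(_ z') /implyP H.
have c' : CNs u v z'.
  by apply: (A_cn (x := x') _ nal0 Ev') => //; rewrite E' D_swap addrC addKr.
have d' : z' != z by apply: (neq_d (k := a)); rewrite E' Ez1; ev; nz (- al).
have na : ~~ csr_adj z z'.
  apply: (nadj3 (i := a) (j := x) (k := b)) => //; rewrite E' Ez1 !ffunE; ev.
  - by nz al.
  - by nz (- al).
  - by nz al.
have := H; rewrite c' d' na => /(_ isT) /existsP [y1 /existsP [y2 /existsP [y3]]].
case/and5P => d12 d13 d23 /andP [y1u /and5P [y1v y2u y2v y3u y3v]] /andP [a1 /and5P [a1' a2 a2' a3 a3']].
have Ez' : val z' - val u = D al x' b by rewrite E' addrC addKr.
have cn y : csr_adj y z -> csr_adj y z' -> y != u -> y != v ->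
    val y - val z' = D al a x \/ val y - val z' = D al b x.
  by move=> ayz ayz' yu yv; apply: (cnb ab al0 Ev (z := z) (x' := x')).
have := cn _ a1 a1' y1u y1v; have := cn _ a2 a2' y2u y2v; have := cn _ a3 a3' y3u y3v.
case=> e3; case=> e2; case=> e1;
  first [ by move/eqP: d12; apply; apply: sameP e1 e2
        | by move/eqP: d13; apply; apply: sameP e1 e3
        | by move/eqP: d23; apply; apply: sameP e2 e3 ].
Qed.

End SecS2.

Section SecS3.
Variables (m n : nat).
Notation V := (csr_vertex m n).
Notation vecT := (vec m n).
Notation Zn := ('Z_n).

Lemma D0 (a b : 'I_m) : D (0 : Zn) a b = 0.
Proof. by apply/ffunP => k; rewrite /D /pt !ffunE; case: (k == a); case: (k == b) => /=; ring. Qed.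

Lemma Dsub (c1 c2 : Zn) (a b : 'I_m) : D c1 a b - D c2 a b = D (c1 - c2) a b.
Proof. by apply/ffunP => k; rewrite /D /pt !ffunE; case: (k == a); case: (k == b) => /=; ring. Qed.

Lemma Cos_eq (u v : V) al a b : (3 < m)%N -> a != b -> al != 0 ->
  val v - val u = D al a b -> Cos u v = coset_S (val u) a b.
Proof.
move=> hm ab al0 Ev.
have ba : b != a by rewrite eq_sym.
have nal0 : - al != 0 by rewrite oppr_eq0.
have Ev' : val v - val u = D (- al) b a by rewrite Ev D_swap.
apply/setP => z; apply/idP/(coset_memP _ _ ab).
  rewrite inE => /orP [/orP [/eqP ->|/eqP ->]|/and3P [cn cq sp]].
  - by exists 0; rewrite subrr D0.
  - by exists al.
  case/andP: (cn) => cu cv.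
  case: (cn_class ab al0 Ev cu cv) => [[be _ Ez]|[x /andP [xa xb] Ez]|[x /andP [xa xb] Ez]].
  - by exists be.
  - by move: (A_bad hm ab al0 Ev xa xb Ez); rewrite cq sp.
  - have Ez' : val z - val u = D (- al) b x by rewrite Ez D_swap.
    by move: (A_bad hm ba nal0 Ev' xb xa Ez'); rewrite cq sp.
case=> be Ez.
have [be0|be0] := eqVneq be 0.
  have -> : z = u by apply/val_inj; rewrite (subE Ez) be0 D0 addr0.
  by rewrite inE eqxx.
have [bea|bea] := eqVneq be al.
  have -> : z = v by apply/val_inj; rewrite (subE Ez) (subE Ev) bea.
  by rewrite inE eqxx orbT.
have nbe0 : - be != 0 by rewrite oppr_eq0.
have nbea : - be != - al by rewrite eqr_opp.
have Ezs : val z - val u = D (- be) b a by rewrite Ez D_swap.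
have Tnb z1 : CNs u v z1 -> csr_adj z z1 -> exists be1, val z1 - val u = D be1 a b.
  case/andP => c1 c2 az.
  case: (cn_class ab al0 Ev c1 c2) => [[be1 _ E1]|[x /andP [xa xb] E1]|[x /andP [xa xb] E1]].
  - by exists be1.
  - by move: (TA_nadj ab al0 xa xb be0 bea Ez E1); rewrite az.
  - have E1' : val z1 - val u = D (- al) b x by rewrite E1 D_swap.
    by move: (TA_nadj ba nal0 xb xa nbe0 nbea Ezs E1'); rewrite az.
rewrite inE; apply/orP; right; apply/and3P; split.
- exact: (T_cn ab Ev be0 bea Ez).
- apply/forallP => z1; apply/forallP => z2.
  apply/implyP => /andP [/andP [/andP [/andP [c1 c2] a1] a2] d12].
  have [be1 E1] := Tnb _ c1 a1; have [be2 E2] := Tnb _ c2 a2.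
  apply: (adj_of_D (c := be1 - be2) ab).
    rewrite subr_eq0; apply: contraNneq d12 => e.
    by apply/eqP/val_inj; rewrite (subE E1) (subE E2) e.
  by rewrite (subE E1) (subE E2) -Dsub; vcomp.
apply/forallP => z'; apply/implyP => /andP [/andP [c' dz] na].
case/andP: (c') => cu cv.
case: (cn_class ab al0 Ev cu cv) => [[be1 /andP [b10 b1a] E1]|[x /andP [xa xb] E1]|[x /andP [xa xb] E1]].
- exfalso; move/negP: na; apply.
  apply: (adj_of_D (c := be - be1) ab).
    rewrite subr_eq0; apply: contraNneq dz => e.
    by apply/eqP/val_inj; rewrite (subE E1) (subE Ez) e.
  by rewrite (subE E1) (subE Ez) -Dsub; vcomp.
- exact: (TA_many ab al0 Ev xa xb be0 bea Ez E1).
- have E1' : val z' - val u = D (- al) b x by rewrite E1 D_swap.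
  exact: (TA_many ba nal0 Ev' xb xa nbe0 nbea Ezs E1').
Qed.

End SecS3.

Section SecS4.
Variables (m n : nat).
Notation V := (csr_vertex m n).
Notation vecT := (vec m n).
Notation Zn := ('Z_n).

Definition Single (c d : 'I_m) (w : vecT) := exists i,
  [/\ i != c, i != d, w i != 0 & forall j, j != c -> j != d -> j != i -> w j = 0].

Lemma single_uniq c d w j k : Single c d w -> j != c -> j != d -> k != c -> k != d ->
  w j != 0 -> w k != 0 -> j = k.
Proof.
case=> i [_ _ _ h] jc jd kc kd wj wk.
have [ji|ji] := eqVneq j i; last by move: wj; rewrite h ?eqxx.
have [ki|ki] := eqVneq k i; last by move: wk; rewrite h ?eqxx.
by rewrite ji ki.
Qed.

Lemma card_Zn : (1 < n)%N -> #|Zn| = n.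
Proof. by move=> h; rewrite card_ord Zp_cast. Qed.

Lemma L_single (s0 : vecT) (a b c d : 'I_m) : (3 < n)%N -> a != b ->
  (forall g, Single c d (s0 + D g a b)) -> (b == c) || (b == d).
Proof.
move=> hn ab H; apply/negPn/negP; rewrite negb_or => /andP [bc bd].
have [i0 [i0c i0d s0i0 s0o]] : Single c d s0 by have := H 0; rewrite D0 addr0.
set b0 := s0 i0 in s0i0.
have s0k k : k != c -> k != d -> s0 k = if k == i0 then b0 else 0.
  by move=> kc kd; have [->|ki] := eqVneq k i0; [|rewrite s0o].
have ba : b != a by rewrite eq_sym.
case ha : ((a == c) || (a == d)).
  have ak k : k != c -> k != d -> k != a.
    by move=> kc kd; case/orP: ha => /eqP ->.
  have hs := H b0.
  have [ib|ib] := eqVneq i0 b.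
    case: hs => i [ic id si _]; move: si; rewrite !ffunE (s0k _ ic id) (negbTE (ak _ ic id)) ib.
    by case: (i == b) => //= /eqP; apply; ring.
  have := single_uniq hs i0c i0d bc bd.
  have i0a := ak _ i0c i0d.
  rewrite !ffunE (s0k _ i0c i0d) (s0k _ bc bd); eqsimp; rewrite /=.
  move=> h; exfalso; move/eqP: ib; apply; apply: h.
    by nz b0.
  by nz (- b0); rewrite oppr_eq0.
have /norP [ac ad] := negbT ha.
have h3 : (3 < #|Zn|)%N by rewrite card_Zn //; lia.
have [g /and3P [g0 gb gnb]] := fresh3 0 b0 (- b0) h3.
have := single_uniq (H g) ac ad bc bd.
rewrite !ffunE (s0k _ ac ad) (s0k _ bc bd); eqsimp; rewrite /= => h.
exfalso; move/eqP: ab; apply; apply: h.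
  have [_|_] := eqVneq a i0.
    by nz (g + b0); rewrite addr_eq0.
  by nz g.
have [_|_] := eqVneq b i0.
  by nz (b0 - g); rewrite subr_eq0 eq_sym.
by nz (- g); rewrite oppr_eq0.
Qed.

Definition Rrel (K K' : {set V}) : Prop :=
  (forall w, w \in K -> w \in K' -> False) /\
  (forall v, v \in K -> exists z1 z2, [/\ z1 \in K', z2 \in K', z1 != z2, csr_adj v z1 & csr_adj v z2]).

Lemma setpair_eq (p q r s : 'I_m) : p != q -> r != s ->
  (p == r) || (p == s) -> (q == r) || (q == s) -> [set p; q] = [set r; s].
Proof.
move=> pq rs /orP [/eqP pr|/eqP ps] /orP [/eqP qr|/eqP qs]; subst => //.
- by rewrite eqxx in pq.
- by rewrite setUC.
- by rewrite eqxx in pq.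
Qed.

Lemma sum2 (w : vecT) c d : c != d -> sumv w = 0 ->
  (forall j, j != c -> j != d -> w j = 0) -> w = D (w c) c d.
Proof.
move=> cd hs h.
have dc : d != c by rewrite eq_sym.
have e : w c + w d = 0.
  rewrite -hs /sumv (bigD1 c) //= (bigD1 d) //= big1 ?addr0 // => k /andP [kc kd].
  exact: h.
apply/ffunP => k; rewrite /D /pt !ffunE.
have [->|kc] := eqVneq k c; first by rewrite (negbTE cd); ring.
have [->|kd] := eqVneq k d; last by rewrite h //; ring.
have -> : w d = - w c by apply/eqP; rewrite -addr_eq0 addrC e.
ring.
Qed.

Lemma single_of (Y Z v : V) a b c d : c != d ->
  Rrel (coset_S (val Y) a b) (coset_S (val Z) c d) -> v \in coset_S (val Y) a b ->
  Single c d (val v - val Z).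
Proof.
move=> cd [disj hR] vK.
have [z1 [z2 [z1K z2K d12 a1 a2]]] := hR v vK.
case/(coset_memP _ _ cd): z1K => g1 E1.
case/(coset_memP _ _ cd): z2K => g2 E2.
have dc : d != c by rewrite eq_sym.
set r1 := val v - val z1.
have r1o j : j != c -> j != d -> (val v - val Z) j = r1 j.
  move=> jc jd; rewrite /r1 (subE E1) !ffunE; eqsimp; rewrite /=; ring.
have hr1 : #|dset r1 0| = 2%N by apply/eqP; rewrite /r1 -dset_sub; exact: a1.
have Er2 : val v - val z2 = r1 + D (g1 - g2) c d.
  by rewrite /r1 (subE E1) (subE E2); vcomp.
have hr2 : #|dset (r1 + D (g1 - g2) c d) 0| = 2%N by apply/eqP; rewrite -Er2 -dset_sub; exact: a2.
have g12 : g1 - g2 != 0.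
  rewrite subr_eq0; apply: contraNneq d12 => e.
  by apply/eqP/val_inj; rewrite (subE E1) (subE E2) e.
have [i /and3P [ic id ri]] : exists i, [&& i != c, i != d & r1 i != 0].
  apply/existsP; apply/contraT; rewrite negb_exists => /forallP hn0; exfalso.
  have r10 j : j != c -> j != d -> r1 j = 0.
    by move=> jc jd; move: (hn0 j); rewrite jc jd /= negbK => /eqP.
  have sr : sumv r1 = 0 by rewrite /r1 sumvB !sumv_val subrr.
  have Er := sum2 cd sr r10.
  apply: (disj v vK); apply/(coset_memP _ _ cd); exists (g1 + r1 c).
  by rewrite -(subrK (val z1) (val v)) -/r1 Er (subE E1); vcomp.
exists i; split => //; first by rewrite r1o.
move=> j jc jd ji; rewrite r1o //; apply/eqP; apply/negPn/negP => rj.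
have rc : r1 c = 0.
  apply/eqP; apply/negPn/negP => rc.
  by move: (three_nz ji jc ic rj ri rc); rewrite hr1.
have := three_nz ji jc ic (w := r1 + D (g1 - g2) c d).
have rj' : val v j - val z1 j != 0 by move: rj; rewrite /r1 !ffunE.
have ri' : val v i - val z1 i != 0 by move: ri; rewrite /r1 !ffunE.
have rc' : val v c - val z1 c = 0 by move: rc; rewrite /r1 !ffunE.
rewrite hr2 !ffunE; eqsimp; rewrite /= rc' => h; suff: ~~ true by [].
apply: h.
- by nz (val v j - val z1 j).
- by nz (val v i - val z1 i).
- by nz (g1 - g2).
Qed.

Lemma mkv_in (Y : V) g a b : a != b -> mkv Y (D g a b) \in coset_S (val Y) a b.
Proof.
move=> ab; apply/(coset_memP _ _ ab); exists g.
by rewrite mkv_val ?sumv_D // addrC addKr.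
Qed.

Lemma R_par (Y Z : V) a b c d : (3 < n)%N -> a != b -> c != d ->
  Rrel (coset_S (val Y) a b) (coset_S (val Z) c d) -> [set a; b] = [set c; d].
Proof.
move=> hn ab cd hR.
have H g : Single c d ((val Y - val Z) + D g a b).
  have := single_of cd hR (mkv_in Y g ab).
  by rewrite mkv_val ?sumv_D //; congr Single; vcomp.
have ba : b != a by rewrite eq_sym.
have H' g : Single c d ((val Y - val Z) + D g b a).
  by rewrite D_swap; apply: H.
exact: (setpair_eq ab cd (L_single hn ba H') (L_single hn ab H)).
Qed.

Lemma Rrel_img (psi : V -> V) K K' : injective psi -> (forall x y, csr_adj (psi x) (psi y) = csr_adj x y) ->
  Rrel K K' -> Rrel (psi @: K) (psi @: K').
Proof.
move=> inj hadj [disj hR]; split.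
  move=> w /imsetP [k1 k1K ->] /imsetP [k2 k2K e].
  by apply: (disj k1 k1K); rewrite (inj _ _ e).
move=> w /imsetP [v vK ->].
have [z1 [z2 [z1K z2K d12 a1 a2]]] := hR v vK.
exists (psi z1), (psi z2); split; rewrite ?hadj ?(inj_eq inj) //; exact: imset_f.
Qed.

Lemma trans_R (X X' : V) a b c be : a != b -> c != a -> c != b -> be != 0 ->
  val X' - val X = D be a c -> Rrel (coset_S (val X) a b) (coset_S (val X') a b).
Proof.
move=> ab ca cb be0 EX.
have ac : a != c by rewrite eq_sym.
have bc : b != c by rewrite eq_sym.
have ba : b != a by rewrite eq_sym.
have EX1 := subE EX.
split.
  move=> w /(coset_memP _ _ ab) [g1 E1] /(coset_memP _ _ ab) [g2 E2].
  move/eqP: be0; apply.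
  have := congr1 (fun f : vecT => f c) E1; have := congr1 (fun f : vecT => f c) E2.
  rewrite EX1 /D /pt !ffunE; eqsimp; rewrite /= => h1 h2.
  apply: (@etrans _ _ ((val w c - (val X c + (0 - be))) - (val w c - val X c))); first ring.
  by rewrite h1 h2; ring.
move=> v /(coset_memP _ _ ab) [g Ev].
have Ev1 := subE Ev.
exists (mkv v (D be a c)), (mkv v (D be b c)).
split.
- by apply/(coset_memP _ _ ab); exists g; rewrite mkv_val ?sumv_D // Ev1 EX1; vcomp.
- by apply/(coset_memP _ _ ab); exists (g - be); rewrite mkv_val ?sumv_D // Ev1 EX1; vcomp.
- by apply: (neq_d (k := a)); rewrite !mkv_val ?sumv_D //; ev; nz be.
- rewrite adj_sym; apply: (adj_of_D ac be0); rewrite mkv_val ?sumv_D //; vcomp.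
- rewrite adj_sym; apply: (adj_of_D bc be0); rewrite mkv_val ?sumv_D //; vcomp.
Qed.

End SecS4.

Section SecS5.
Variables (m n : nat).
Hypothesis hn : (4 <= n)%N.
Hypothesis hm : (3 < m)%N.
Notation V := (csr_vertex m n).
Notation vecT := (vec m n).
Notation Zn := ('Z_n).

Variable psi : V -> V.
Hypothesis psi_bij : bijective psi.
Hypothesis hadj : forall x y, csr_adj (psi x) (psi y) = csr_adj x y.

Lemma one0 : (1 : Zn) != 0.
Proof. exact: oner_neq0. Qed.

Lemma edge_img (X : V) a b : a != b ->
  exists p' q', p' != q' /\ psi @: coset_S (val X) a b = coset_S (val (psi X)) p' q'.
Proof.
move=> ab.
set X1 := mkv X (D 1 a b).
have E : val X1 - val X = D 1 a b by rewrite mkv_val ?sumv_D // addrC addKr.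
rewrite -(Cos_eq hm ab one0 E) (Cos_img psi_bij hadj).
have : csr_adj (psi X) (psi X1) by rewrite hadj adj_sym; exact: (adj_of_D ab one0 E).
case/adj_form => [i [j [c [ij c0 Ec]]]].
by exists i, j; split => //; rewrite (Cos_eq hm ij c0 Ec).
Qed.

Lemma coset_pair (Y Y' : V) p q r s : p != q -> r != s ->
  coset_S (val Y) p q = coset_S (val Y') r s -> [set p; q] = [set r; s].
Proof.
move=> pq rs E.
set Y1 := mkv Y (D 1 p q).
have E1 : val Y1 - val Y = D 1 p q by rewrite mkv_val ?sumv_D // addrC addKr.
have Yin : Y \in coset_S (val Y) p q by apply/(coset_memP _ _ pq); exists 0; rewrite subrr D0.
have Y1in : Y1 \in coset_S (val Y) p q by apply/(coset_memP _ _ pq); exists 1.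
rewrite E in Yin Y1in.
case/(coset_memP _ _ rs): Yin => g Eg; case/(coset_memP _ _ rs): Y1in => g' Eg'.
have e : D 1 p q = D g' r s - D g r s by rewrite -E1 -Eg -Eg' opprB addrA subrK.
have key k : D (1 : Zn) p q k != 0 -> (k == r) || (k == s).
  rewrite e; apply: contraTT; rewrite negb_or => /andP [kr ks]; rewrite negbK.
  by rewrite /D /pt !ffunE; eqsimp; rewrite /=; apply/eqP; ring.
have qp : q != p by rewrite eq_sym.
apply: (setpair_eq pq rs); apply: key; ev.
all: try by nz (1 : Zn); exact: one0.
all: by nz (- 1 : Zn); rewrite oppr_eq0 one0.
Qed.

Definition DirP (K : {set V}) (P : {set 'I_m}) :=
  exists (Y : V) p q, [/\ p != q, P = [set p; q] & psi @: K = coset_S (val Y) p q].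

Lemma step (X X'' : V) a b c be P : a != b -> c != a -> c != b -> be != 0 ->
  val X'' - val X = D be a c -> DirP (coset_S (val X) a b) P -> DirP (coset_S (val X'') a b) P.
Proof.
move=> ab ca cb be0 EX [Y [p [q [pq -> EY]]]].
have [p' [q' [pq' E']]] := edge_img X'' ab.
have hR := Rrel_img (bij_inj psi_bij) hadj (trans_R ab ca cb be0 EX).
rewrite EY E' in hR.
have e := R_par hn pq pq' hR.
by exists (psi X''), p', q'; split.
Qed.

Lemma same_coset (X X' : V) a b g : a != b -> val X' - val X = D g a b ->
  coset_S (val X) a b = coset_S (val X') a b.
Proof.
move=> ab E; apply/setP => z; apply/(coset_memP _ _ ab)/(coset_memP _ _ ab) => [[g1 E1]|[g1 E1]].
  by exists (g1 - g); rewrite (subE E1) (subE E); vcomp.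
by exists (g1 + g); rewrite (subE E1) (subE E); vcomp.
Qed.

Definition Sset (X X' : V) (a b : 'I_m) := [set c | [&& c != a, c != b & (val X' - val X) c != 0]].

Lemma base_case a b P (X X' : V) : a != b -> Sset X X' a b = set0 ->
  DirP (coset_S (val X) a b) P -> DirP (coset_S (val X') a b) P.
Proof.
move=> ab S0.
have h j : j != a -> j != b -> (val X' - val X) j = 0.
  move=> ja jb; apply/eqP; apply/negPn/negP => hj.
  have : j \in Sset X X' a b by rewrite inE ja jb hj.
  by rewrite S0 inE.
have sr : sumv (val X' - val X) = 0 by rewrite sumvB !sumv_val subrr.
by rewrite (same_coset ab (sum2 ab sr h)).
Qed.

Lemma chain_aux a b P k : a != b -> forall X X' : V, (#|Sset X X' a b| <= k)%N ->
  DirP (coset_S (val X) a b) P -> DirP (coset_S (val X') a b) P.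
Proof.
move=> ab; elim: k => [|k IH] X X' hk hd.
  by apply: (base_case ab) hd; apply/eqP; rewrite -cards_eq0 -leqn0.
case: (set_0Vmem (Sset X X' a b)) => [S0|[c cS]]; first exact: (base_case ab S0).
move: (cS); rewrite inE => /and3P [ca cb bnz].
set be := (val X' - val X) c in bnz.
have nbe : - be != 0 by rewrite oppr_eq0.
set X'' := mkv X (D (- be) a c).
have E'' : val X'' - val X = D (- be) a c by rewrite mkv_val ?sumv_D // addrC addKr.
have hd'' := step ab ca cb nbe E'' hd.
apply: (IH X'' X') hd''.
have sub : Sset X'' X' a b \subset Sset X X' a b :\ c.
  apply/subsetP => j; rewrite !inE => /and3P [ja jb hj].
  have ac : a != c by rewrite eq_sym.
  move: hj; rewrite (subE E'') /be !ffunE; eqsimp.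
  have [->|jc] := eqVneq j c; rewrite ?eqxx /=.
    by move=> h; exfalso; move/eqP: h; apply; ring.
  by move=> h; apply: (nz_eq _ h); ring.
move/subset_leq_card: sub; rewrite (cardsD1 c) cS add1n ltnS in hk.
by move=> h; apply: leq_trans h hk.
Qed.

End SecS5.

Local Close Scope ring_scope.

Theorem lemma4 (m n : nat) (hn : (4 <= n)%N) (hm : (3 < m)%N)
  (psi : csr_vertex m n -> csr_vertex m n) (hpsi : csr_automorphism psi)
  (a b : 'I_m) (hab : a != b) (xi xi' : csr_vertex m n)
  (vs vs' : csr_vertex m n) (p q r s : 'I_m) (hpq : p != q) (hrs : r != s) :
  psi @: coset_S (val xi) a b = coset_S (val vs) p q ->
  psi @: coset_S (val xi') a b = coset_S (val vs') r s ->
  [set p; q] = [set r; s].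
Proof.
case: hpsi => bij hadj H1 H2.
have d0 : DirP psi (coset_S (val xi) a b) [set p; q] by exists vs, p, q.
have := chain_aux hn hm bij hadj (k := #|Sset xi xi' a b|) hab (leqnn _) d0.
case=> Y [p0 [q0 [pq0 -> E]]].
exact: (coset_pair pq0 hrs (etrans (esym E) H2)).
Qed.
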